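(* Fix $n\ge d+1$ and a realization for which $S_n$ is positive definite. Then \[ \lim_{\gamma\to\infty}\gamma^{2+d/2}\,\frac{16\,T_{n,\gamma}}{n\,\pi^{d/2}}=2b_{1,d}+\widetilde b_{1,d}, \] where \[ b_{1,d}=\frac{1}{n^2}\sum_{j,k=1}^n (Y_{n,j}^\top Y_{n,k})^3,\qquad \widetilde b_{1,d}=\frac{1}{n^2}\sum_{j,k=1}^n Y_{n,j}^\top Y_{n,k}\,\|Y_{n,j}\|^2\,\|Y_{n,k}\|^2 . \]
   Context: Let $X_1,\dots,X_n$ be points of $\mathbb{R}^d$ (realizations of i.i.d. absolutely continuous random vectors). Put $\overline{X}_n=n^{-1}\sum_{j=1}^n X_j$, $S_n=n^{-1}\sum_{j=1}^n (X_j-\overline{X}_n)(X_j-\overline{X}_n)^\top$, let $S_n^{-1/2}$ be the symmetric positive definite square root of $S_n^{-1}$, and $Y_{n,j}=S_n^{-1/2}(X_j-\overline{X}_n)$. Let $M_n(t)=n^{-1}\sum_{j=1}^n \exp(t^\top Y_{n,j})$ with gradient $M_n'$, $w_\gamma(t)=\exp(-\gamma\|t\|^2)$, and $T_{n,\gamma}=n\int_{\mathbb{R}^d}\|M_n'(t)-tM_n(t)\|^2w_\gamma(t)\,\mathrm{d}t$. *)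

(* Defs.v *)
From Stdlib Require Import Reals Lra.
Open Scope R_scope.

Fixpoint rsum (n : nat) (f : nat -> R) : R :=
  match n with O => 0 | S k => rsum k f + f k end.

(* Vectors of R^d are functions nat -> R (only indices < d matter);
   a sample X_1..X_n is X : nat -> nat -> R, X j i = i-th coord of X_{j+1}. *)
Definition dot (d : nat) (u v : nat -> R) : R := rsum d (fun i => u i * v i).
Definition nrm2 (d : nat) (u : nat -> R) : R := dot d u u.

Definition sample_mean (n : nat) (X : nat -> nat -> R) (i : nat) : R :=
  / INR n * rsum n (fun j => X j i).

Definition sample_cov (n : nat) (X : nat -> nat -> R) (i k : nat) : R :=
  / INR n * rsum n (fun j => (X j i - sample_mean n X i) * (X j k - sample_mean n X k)).

Definition sym_mat (d : nat) (A : nat -> nat -> R) : Prop :=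
  forall i k, (i < d)%nat -> (k < d)%nat -> A i k = A k i.

Definition pos_def (d : nat) (A : nat -> nat -> R) : Prop :=
  forall v : nat -> R, (exists i, (i < d)%nat /\ v i <> 0) ->
    0 < rsum d (fun i => rsum d (fun k => v i * A i k * v k)).

Definition mat_mul (d : nat) (A B : nat -> nat -> R) : nat -> nat -> R :=
  fun i k => rsum d (fun l => A i l * B l k).

Definition is_inverse (d : nat) (A B : nat -> nat -> R) : Prop :=
  forall i k, (i < d)%nat -> (k < d)%nat ->
    mat_mul d A B i k = if Nat.eqb i k then 1 else 0.

Definition is_sym_sqrt_inv (d : nat) (A S : nat -> nat -> R) : Prop :=
  sym_mat d A /\ pos_def d A /\ is_inverse d (mat_mul d A A) S.

Definition Yres (n d : nat) (A : nat -> nat -> R) (X : nat -> nat -> R)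
  (j : nat) : nat -> R :=
  fun i => rsum d (fun l => A i l * (X j l - sample_mean n X l)).

Definition Mn (n d : nat) (Y : nat -> nat -> R) (t : nat -> R) : R :=
  / INR n * rsum n (fun j => exp (dot d t (Y j))).
Definition Mn_grad (n d : nat) (Y : nat -> nat -> R) (t : nat -> R) (i : nat) : R :=
  / INR n * rsum n (fun j => Y j i * exp (dot d t (Y j))).

Definition integrand (n d : nat) (Y : nat -> nat -> R) (gamma : R) (t : nat -> R) : R :=
  rsum d (fun i => (Mn_grad n d Y t i - t i * Mn n d Y t) ^ 2)
  * exp (- gamma * nrm2 d t).

Definition ImproperInt (g : R -> R) (l : R) : Prop :=
  (forall a b, exists pr : Riemann_integrable g a b, True) /\
  forall eps, 0 < eps -> exists M, forall a b (pr : Riemann_integrable g a b),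
      a <= - M -> M <= b -> Rabs (RiemannInt pr - l) < eps.

Definition vcons (x : R) (t : nat -> R) : nat -> R :=
  fun i => match i with O => x | S i' => t i' end.

(* Integral over R^d as iterated improper Riemann integral
   (first coordinate outermost). *)
Fixpoint IntRd (d : nat) (F : (nat -> R) -> R) (v : R) : Prop :=
  match d with
  | O => v = F (fun _ => 0)
  | S d' => exists g : R -> R,
      (forall x, IntRd d' (fun t => F (vcons x t)) (g x)) /\ ImproperInt g v
  end.

Definition is_T (n d : nat) (Y : nat -> nat -> R) (gamma v : R) : Prop :=
  exists I, IntRd d (integrand n d Y gamma) I /\ v = INR n * I.

Definition lim_infty (f : R -> R) (L : R) : Prop :=
  forall eps, 0 < eps -> exists M, forall x, M < x -> Rabs (f x - L) < eps.

Definition b1d (n d : nat) (Y : nat -> nat -> R) : R :=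
  / (INR n ^ 2) * rsum n (fun j => rsum n (fun k => (dot d (Y j) (Y k)) ^ 3)).

Definition b1d_tilde (n d : nat) (Y : nat -> nat -> R) : R :=
  / (INR n ^ 2) * rsum n (fun j => rsum n (fun k =>
      dot d (Y j) (Y k) * nrm2 d (Y j) * nrm2 d (Y k))).

(* Main.v *)
Require Import Defs.
From Stdlib Require Import Reals Lra Lia Psatz FunctionalExtensionality.
From Coquelicot Require Import Coquelicot.
Open Scope R_scope.

Lemma exR_cont (f : R -> R) a b : (forall z, Rmin a b <= z <= Rmax a b -> continuous f z) -> ex_RInt f a b.
Proof. apply (@ex_RInt_continuous R_CompleteNormedModule). Qed.

Lemma contR_der (f : R -> R) x : ex_derive f x -> continuous f x.
Proof. apply (@ex_derive_continuous R_AbsRing R_NormedModule). Qed.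

Lemma RInt_correctR (f : R -> R) a b : ex_RInt f a b -> is_RInt f a b (RInt f a b).
Proof. apply (@RInt_correct R_CompleteNormedModule). Qed.

Lemma RInt_scalR (f : R -> R) a b l : ex_RInt f a b -> RInt (fun x => l * f x) a b = l * RInt f a b.
Proof. intros H. exact (@RInt_scal R_CompleteNormedModule f a b l H). Qed.

Lemma RInt_extR (f g : R -> R) a b : (forall x, Rmin a b < x < Rmax a b -> f x = g x) -> RInt f a b = RInt g a b.
Proof. apply (@RInt_ext R_CompleteNormedModule). Qed.

Lemma exp_le x y : x <= y -> exp x <= exp y.
Proof. intros [H|H]. left; apply exp_increasing; auto. subst; lra. Qed.

Definition gf (u : R) : R := exp (- (u * u)).
Definition Phi (x : R) : R := RInt gf 0 x.

Lemma gf_cont x : continuous gf x.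
Proof. apply contR_der. unfold gf. auto_derive. auto. Qed.

Lemma gf_ex a b : ex_RInt gf a b.
Proof. apply exR_cont. intros; apply gf_cont. Qed.

Lemma Phi_derive x : is_derive Phi x (gf x).
Proof.
  apply is_derive_RInt with (a := 0).
  - apply filter_forall. intros b. apply RInt_correctR. apply gf_ex.
  - apply gf_cont.
Qed.

Definition gk (x t : R) : R := exp (- (x * x) * (1 + t * t)) / (1 + t * t).
Definition Gf (x : R) : R := RInt (gk x) 0 1.

Lemma pos1t t : 0 < 1 + t * t.
Proof. nra. Qed.

Lemma gk_cont x t : continuous (gk x) t.
Proof. apply contR_der. unfold gk. auto_derive. pose proof (pos1t t); lra. Qed.

Lemma gk_ex x a b : ex_RInt (gk x) a b.
Proof. apply exR_cont. intros; apply gk_cont. Qed.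

Lemma Derive_gk u v : Derive (fun z => gk z v) u = -2 * u * exp (- (u * u) * (1 + v * v)).
Proof.
  apply is_derive_unique. unfold gk. auto_derive.
  - pose proof (pos1t v); lra.
  - field. pose proof (pos1t v); lra.
Qed.

Lemma cont2_exp (f : R -> R -> R) x y : continuity_2d_pt f x y ->
  continuity_2d_pt (fun u v => exp (f u v)) x y.
Proof.
  intros H. apply continuity_1d_2d_pt_comp; auto.
  apply derivable_continuous_pt. apply derivable_pt_exp.
Qed.

Lemma Gf_derive x : is_derive Gf x (-2 * x * exp (- (x * x)) * RInt (fun s => gf (x * s)) 0 1).
Proof.
  unfold Gf.
  assert (H := is_derive_RInt_param gk 0 1 x).
  replace (-2 * x * exp (- (x * x)) * RInt (fun s => gf (x * s)) 0 1)
    with (RInt (fun t => Derive (fun u => gk u t) x) 0 1).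
  - apply H.
    + apply filter_forall. intros x0 t _. unfold gk. auto_derive. pose proof (pos1t t); lra.
    + intros t _. eapply continuity_2d_pt_ext.
      { intros u v. symmetry. apply Derive_gk. }
      apply continuity_2d_pt_mult.
      * apply continuity_2d_pt_mult. apply continuity_2d_pt_const. apply continuity_2d_pt_id1.
      * apply cont2_exp. apply continuity_2d_pt_mult.
        -- apply continuity_2d_pt_opp. apply continuity_2d_pt_mult; apply continuity_2d_pt_id1.
        -- apply continuity_2d_pt_plus. apply continuity_2d_pt_const.
           apply continuity_2d_pt_mult; apply continuity_2d_pt_id2.
    + apply filter_forall. intros y. apply gk_ex.
  - rewrite (RInt_extR _ (fun t => (-2 * x * exp (- (x * x))) * (gf (x * t)))).
    + rewrite RInt_scalR. reflexivity.
      apply exR_cont. intros z _.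
      apply contR_der. unfold gf. auto_derive. auto.
    + intros t _. rewrite Derive_gk. unfold gf.
      replace (- (x * x) * (1 + t * t)) with (- (x * x) + - (x * t * (x * t))) by ring.
      rewrite exp_plus. ring.
Qed.

Lemma Phi_lin x : Phi x = x * RInt (fun s => gf (x * s)) 0 1.
Proof.
  unfold Phi.
  assert (H := RInt_comp_lin gf x 0 0 1).
  replace (x * 0 + 0) with 0 in H by ring. replace (x * 1 + 0) with x in H by ring.
  rewrite <- H by apply gf_ex.
  rewrite (RInt_extR _ (fun y => x * (gf (x * y)))).
  - rewrite RInt_scalR. reflexivity.
    apply exR_cont. intros z _.
    apply contR_der. unfold gf. auto_derive. auto.
  - intros; now rewrite Rplus_0_r.
Qed.

Lemma h_derive x : is_derive (fun x => Phi x * Phi x + Gf x) x 0.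
Proof.
  replace 0 with (gf x * Phi x + Phi x * gf x + (-2 * x * exp (- (x * x)) * RInt (fun s => gf (x * s)) 0 1)).
  - eapply (@is_derive_plus R_AbsRing R_NormedModule).
    + eapply (@is_derive_mult R_AbsRing). apply Phi_derive. apply Phi_derive.
      intros; apply Rmult_comm.
    + apply Gf_derive.
  - rewrite Phi_lin. unfold gf. ring.
Qed.

Lemma is_RInt_deriveR (f df : R -> R) a b :
  (forall x, Rmin a b <= x <= Rmax a b -> is_derive f x (df x)) ->
  (forall x, Rmin a b <= x <= Rmax a b -> continuous df x) ->
  is_RInt df a b (f b - f a).
Proof. intros H1 H2. exact (@is_RInt_derive R_CompleteNormedModule f df a b H1 H2). Qed.

Lemma is_RInt_uniqueR (f : R -> R) a b l : is_RInt f a b l -> RInt f a b = l.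
Proof. apply (@is_RInt_unique R_CompleteNormedModule). Qed.

Lemma der_cont_pt (f : R -> R) x l : is_derive f x l -> continuity_pt f x.
Proof.
  intros H. apply continuity_pt_filterlim. apply contR_der. exists l; exact H.
Qed.

Lemma const_of_der0 (f : R -> R) : (forall x, is_derive f x 0) -> forall x, f x = f 0.
Proof.
  intros H x. destruct (MVT_gen f 0 x (fun _ => 0)) as [c [_ Hc]].
  - intros; apply H.
  - intros; eapply der_cont_pt; apply H.
  - lra.
Qed.

Lemma Gf0 : Gf 0 = PI / 4.
Proof.
  unfold Gf. rewrite (RInt_extR _ (fun t => / (1 + t * t))).
  - rewrite (is_RInt_uniqueR _ 0 1 (atan 1 - atan 0)). rewrite atan_1, atan_0. lra.
    apply is_RInt_deriveR.
    + intros. apply is_derive_atan.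
    + intros. apply contR_der. auto_derive. pose proof (pos1t x); lra.
  - intros t _. unfold gk. replace (- (0 * 0) * (1 + t * t)) with 0 by ring. rewrite exp_0. field.
    pose proof (pos1t t); lra.
Qed.

Lemma h_val x : Phi x * Phi x + Gf x = PI / 4.
Proof.
  rewrite (const_of_der0 (fun x => Phi x * Phi x + Gf x)).
  - unfold Phi at 1 2. rewrite RInt_point. rewrite Gf0. unfold zero; simpl. ring.
  - apply h_derive.
Qed.

Lemma Gf_bounds x : 0 <= Gf x <= exp (- (x * x)).
Proof.
  unfold Gf. split.
  - apply RInt_ge_0. lra. apply gk_ex. intros t _. unfold gk.
    apply Rlt_le. apply Rdiv_lt_0_compat. apply exp_pos. apply pos1t.
  - replace (exp (- (x * x))) with (RInt (fun _ => exp (- (x * x))) 0 1).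
    + apply RInt_le. lra. apply gk_ex. apply ex_RInt_const.
      intros t Ht. unfold gk. pose proof (pos1t t).
      assert (exp (- (x * x) * (1 + t * t)) <= exp (- (x * x))).
      { apply exp_le. nra. }
      apply Rle_trans with (exp (- (x * x) * (1 + t * t))).
      * unfold Rdiv. rewrite <- (Rmult_1_r (exp (- (x * x) * (1 + t * t)))) at 2.
        apply Rmult_le_compat_l. apply Rlt_le, exp_pos.
        rewrite <- Rinv_1. apply Rinv_le_contravar; nra.
      * auto.
    + rewrite RInt_const. unfold scal; simpl. unfold mult; simpl. ring.
Qed.

Lemma Phi_ge0 x : 0 <= x -> 0 <= Phi x.
Proof.
  intros. apply RInt_ge_0; auto. apply gf_ex. intros. apply Rlt_le, exp_pos.
Qed.

Lemma exp_neg_small y : 0 < y -> exp (- y) < / y.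
Proof.
  intros Hy. rewrite exp_Ropp. apply Rinv_lt_contravar. 
  apply Rmult_lt_0_compat; auto. apply exp_pos.
  pose proof (exp_ineq1 y). lra.
Qed.

Definition lim_p (f : R -> R) (l : R) := forall eps, 0 < eps -> exists M, forall x, M <= x -> Rabs (f x - l) < eps.
Definition lim_m (f : R -> R) (l : R) := forall eps, 0 < eps -> exists M, forall x, x <= M -> Rabs (f x - l) < eps.

Lemma sqrtPI_pos : 0 < sqrt PI.
Proof. apply sqrt_lt_R0. apply PI_RGT_0. Qed.

Lemma Phi_lim_p : lim_p Phi (sqrt PI / 2).
Proof.
  intros eps Heps. pose proof sqrtPI_pos as Hs.
  exists (Rmax 1 (2 / (eps * sqrt PI))). intros x Hx.
  assert (H1 : 1 <= x) by (eapply Rle_trans; [apply Rmax_l | exact Hx]).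
  assert (H2 : 2 / (eps * sqrt PI) <= x) by (eapply Rle_trans; [apply Rmax_r | exact Hx]).
  pose proof (h_val x) as Hh. pose proof (Gf_bounds x) as [Hg1 Hg2].
  pose proof (Phi_ge0 x ltac:(lra)) as Hp.
  assert (Hsq : sqrt PI * sqrt PI = PI) by (apply sqrt_sqrt; pose proof PI_RGT_0; lra).
  assert (He : exp (- (x * x)) <= exp (- x)) by (apply exp_le; nra).
  pose proof (exp_neg_small x ltac:(lra)) as Hx2.
  assert (Hinv : / x <= eps * sqrt PI / 2).
  { apply Rle_trans with (/ (2 / (eps * sqrt PI))).
    apply Rinv_le_contravar; auto. apply Rdiv_lt_0_compat; [lra| apply Rmult_lt_0_compat; lra].
    right. field. split; lra. }
  (* |Phi - s/2| * (Phi + s/2) = |Phi^2 - PI/4| = Gf <= exp(-x^2) *)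
  assert (Hprod : Rabs (Phi x - sqrt PI / 2) * (Phi x + sqrt PI / 2) = Gf x).
  { rewrite <- (Rabs_pos_eq (Phi x + sqrt PI / 2)) by lra. rewrite <- Rabs_mult.
    replace ((Phi x - sqrt PI / 2) * (Phi x + sqrt PI / 2)) with (- Gf x) by nra.
    rewrite Rabs_Ropp. apply Rabs_pos_eq; auto. }
  assert (Rabs (Phi x - sqrt PI / 2) * (sqrt PI / 2) <= Rabs (Phi x - sqrt PI / 2) * (Phi x + sqrt PI / 2)).
  { apply Rmult_le_compat_l. apply Rabs_pos. lra. }
  assert (Rabs (Phi x - sqrt PI / 2) * (sqrt PI / 2) < eps * sqrt PI / 2) by lra.
  nra.
Qed.

Lemma Phi_odd x : Phi (- x) = - Phi x.
Proof.
  assert (H := const_of_der0 (fun x => Phi (- x) + Phi x)).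
  assert (H0 : forall y, is_derive (fun x => Phi (- x) + Phi x) y 0).
  { intros y. replace 0 with (-1 * gf (- y) + gf y).
    eapply (@is_derive_plus R_AbsRing R_NormedModule).
    - apply (is_derive_comp Phi (fun x => - x)). apply Phi_derive.
      replace (-1) with (- (1)) by ring. apply (@is_derive_opp R_AbsRing R_NormedModule). apply (@is_derive_id R_AbsRing).
    - apply Phi_derive.
    - unfold gf. replace (- y * - y) with (y * y) by ring. ring. }
  specialize (H H0 x). simpl in H. replace (- 0) with 0 in H by ring.
  unfold Phi at 3 4 in H. rewrite RInt_point in H. unfold zero in H; simpl in H. lra.
Qed.

Lemma Phi_lim_m : lim_m Phi (- (sqrt PI / 2)).
Proof.
  intros eps Heps. destruct (Phi_lim_p eps Heps) as [M HM].
  exists (- M). intros x Hx. replace x with (- (- x)) by ring. rewrite Phi_odd.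
  replace (- Phi (- x) - - (sqrt PI / 2)) with (- (Phi (- x) - sqrt PI / 2)) by ring.
  rewrite Rabs_Ropp. apply HM. lra.
Qed.

Lemma lim_p_plus f g l1 l2 : lim_p f l1 -> lim_p g l2 -> lim_p (fun x => f x + g x) (l1 + l2).
Proof.
  intros H1 H2 eps He. destruct (H1 (eps/2) ltac:(lra)) as [M1 HM1].
  destruct (H2 (eps/2) ltac:(lra)) as [M2 HM2]. exists (Rmax M1 M2). intros x Hx.
  assert (M1 <= x) by (eapply Rle_trans; [apply Rmax_l|exact Hx]).
  assert (M2 <= x) by (eapply Rle_trans; [apply Rmax_r|exact Hx]).
  specialize (HM1 x H). specialize (HM2 x H0).
  replace (f x + g x - (l1 + l2)) with ((f x - l1) + (g x - l2)) by ring.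
  eapply Rle_lt_trans. apply Rabs_triang. lra.
Qed.

Lemma lim_p_scal f l k : lim_p f l -> lim_p (fun x => k * f x) (k * l).
Proof.
  intros H eps He. destruct (H (eps / (Rabs k + 1))) as [M HM].
  { apply Rdiv_lt_0_compat; auto. pose proof (Rabs_pos k); lra. }
  exists M. intros x Hx. specialize (HM x Hx).
  replace (k * f x - k * l) with (k * (f x - l)) by ring. rewrite Rabs_mult.
  pose proof (Rabs_pos k). pose proof (Rabs_pos (f x - l)).
  apply Rle_lt_trans with ((Rabs k + 1) * Rabs (f x - l)). nra.
  replace eps with ((Rabs k + 1) * (eps / (Rabs k + 1))) by (field; lra).
  apply Rmult_lt_compat_l; lra.
Qed.

Lemma lim_p_const l : lim_p (fun _ => l) l.
Proof. intros eps He. exists 0. intros. rewrite Rminus_eq_0, Rabs_R0. auto. Qed.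

Lemma lim_p_lin f l a b : 0 < a -> lim_p f l -> lim_p (fun x => f (a * x + b)) l.
Proof.
  intros Ha H eps He. destruct (H eps He) as [M HM]. exists ((M - b) / a).
  intros x Hx. apply HM. apply Rmult_le_compat_l with (r := a) in Hx; [|lra].
  replace (a * ((M - b) / a)) with (M - b) in Hx by (field; lra). lra.
Qed.

Lemma lim_m_of_p f l : lim_p (fun y => f (- y)) l -> lim_m f l.
Proof.
  intros H eps He. destruct (H eps He) as [M HM]. exists (- M). intros x Hx.
  replace x with (- - x) by ring. apply HM. lra.
Qed.

Lemma lim_p_ext f g l : (forall x, f x = g x) -> lim_p f l -> lim_p g l.
Proof. intros E H eps He. destruct (H eps He) as [M HM]. exists M. intros. rewrite <- E. auto. Qed.

Definition E1 (g c x : R) : R := exp (c * x - g * x * x).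

Lemma E1_decay g c B C : 0 < g -> lim_p (fun x => (B + C * x) * E1 g c x) 0.
Proof.
  intros Hg eps He.
  set (K := Rabs B + Rabs C).
  exists (Rmax 1 (Rmax ((Rabs c + 1) / g) (4 * K / eps + 1))). intros x Hx.
  assert (H1 : 1 <= x) by (eapply Rle_trans; [apply Rmax_l|exact Hx]).
  assert (H2 : (Rabs c + 1) / g <= x) by (eapply Rle_trans; [eapply Rle_trans; [apply Rmax_l|apply Rmax_r]|exact Hx]).
  assert (H3 : 4 * K / eps + 1 <= x) by (eapply Rle_trans; [eapply Rle_trans; [apply Rmax_r|apply Rmax_r]|exact Hx]).
  rewrite Rminus_0_r, Rabs_mult. unfold E1. rewrite (Rabs_pos_eq (exp _)) by (apply Rlt_le, exp_pos).
  assert (Hc : c * x <= Rabs c * x) by (apply Rmult_le_compat_r; [lra| apply RRle_abs]).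
  assert (Hgx : Rabs c + 1 <= g * x).
  { apply Rmult_le_compat_l with (r := g) in H2; [|lra].
    replace (g * ((Rabs c + 1) / g)) with (Rabs c + 1) in H2 by (field; lra). lra. }
  assert (Hexp : exp (c * x - g * x * x) <= exp (- (x / 2)) * exp (- (x / 2))).
  { rewrite <- exp_plus. apply exp_le. nra. }
  pose proof (exp_neg_small (x / 2) ltac:(lra)) as Hs.
  pose proof (exp_pos (- (x / 2))) as Hp.
  assert (HB : Rabs (B + C * x) <= K * x).
  { eapply Rle_trans. apply Rabs_triang. rewrite Rabs_mult, (Rabs_pos_eq x) by lra.
    unfold K. pose proof (Rabs_pos B). pose proof (Rabs_pos C). nra. }
  assert (HK : 0 <= K) by (unfold K; pose proof (Rabs_pos B); pose proof (Rabs_pos C); lra).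
  assert (Hsq : exp (- (x / 2)) * exp (- (x / 2)) <= / (x / 2) * / (x / 2)).
  { apply Rmult_le_compat; lra. }
  apply Rle_lt_trans with (K * x * (/ (x / 2) * / (x / 2))).
  { apply Rmult_le_compat; try apply Rabs_pos; try (apply Rlt_le, exp_pos); lra. }
  replace (K * x * (/ (x / 2) * / (x / 2))) with (4 * K / x) by (field; lra).
  apply Rmult_lt_reg_r with (r := x). lra. unfold Rdiv. rewrite Rmult_assoc, Rinv_l, Rmult_1_r by lra.
  apply Rmult_le_compat_l with (r := eps) in H3; [|lra].
  replace (eps * (4 * K / eps + 1)) with (4 * K + eps) in H3 by (field; lra). lra.
Qed.

Definition G0 (g c x : R) : R := exp (c * c / (4 * g)) / sqrt g * Phi (sqrt g * x + - (c / (2 * sqrt g))).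

Lemma G0_derive g c x : 0 < g -> is_derive (G0 g c) x (E1 g c x).
Proof.
  intros Hg. pose proof (sqrt_lt_R0 g Hg) as Hs. pose proof (sqrt_sqrt g ltac:(lra)) as Hss.
  unfold G0. auto_derive.
  - exists (gf (sqrt g * x + - (c / (2 * sqrt g)))). apply Phi_derive.
  - replace (Derive (fun x0 : R => Phi x0) (sqrt g * x + - (c / (2 * sqrt g))))
      with (gf (sqrt g * x + - (c / (2 * sqrt g)))).
    2:{ symmetry. apply is_derive_unique. apply Phi_derive. }
    unfold gf, E1.
    replace (exp (c * c / (4 * g)) / sqrt g * (sqrt g * 1 * exp (- ((sqrt g * x + - (c / (2 * sqrt g))) * (sqrt g * x + - (c / (2 * sqrt g)))))))
      with (exp (c * c / (4 * g)) * exp (- ((sqrt g * x + - (c / (2 * sqrt g))) * (sqrt g * x + - (c / (2 * sqrt g)))))) by (field; lra).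
    rewrite <- exp_plus. f_equal. set (s := sqrt g) in *. clearbody s. subst g. field. lra.
Qed.

Lemma lim_p_of_m f l : lim_m f l -> lim_p (fun y => f (- y)) l.
Proof.
  intros H eps He. destruct (H eps He) as [M HM]. exists (- M). intros x Hx. apply HM. lra.
Qed.

Definition hfun (g c A B C x : R) : R :=
  (A + C + B * c + (C * c - 2 * g * B) * x - 2 * g * C * x * x) * E1 g c x.
Definition Hprim (g c A B C x : R) : R := A * G0 g c x + (B + C * x) * E1 g c x.

Lemma Hprim_derive g c A B C x : 0 < g -> is_derive (Hprim g c A B C) x (hfun g c A B C x).
Proof.
  intros Hg. unfold Hprim, hfun, E1. auto_derive.
  - exists (E1 g c x). apply G0_derive; auto.
  - replace (Derive (fun x0 : R => G0 g c x0) x) with (E1 g c x).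
    2:{ symmetry. apply is_derive_unique. apply G0_derive; auto. }
    unfold E1. unfold Rminus. ring.
Qed.

Lemma hfun_cont g c A B C x : continuous (hfun g c A B C) x.
Proof. apply contR_der. unfold hfun, E1. auto_derive. auto. Qed.

Lemma Rabs_sub_le x y : Rabs (x - y) <= Rabs x + Rabs y.
Proof. unfold Rminus. rewrite <- (Rabs_Ropp y). apply Rabs_triang. Qed.

Lemma improper_prim g H Lp Lm :
  (forall x, is_derive H x (g x)) -> (forall x, continuous g x) ->
  lim_p H Lp -> lim_m H Lm -> ImproperInt g (Lp - Lm).
Proof.
  intros Hd Hc Hp Hm.
  assert (Hi : forall a b, is_RInt g a b (H b - H a)).
  { intros a b. apply is_RInt_deriveR; intros; auto. }
  split.
  - intros a b. exists (ex_RInt_Reals_0 g a b (ex_intro _ _ (Hi a b))). exact I.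
  - intros eps He. destruct (Hp (eps/2) ltac:(lra)) as [M1 HM1].
    destruct (Hm (eps/2) ltac:(lra)) as [M2 HM2]. exists (Rmax M1 (- M2)).
    intros a b pr Ha Hb.
    rewrite <- RInt_Reals. rewrite (is_RInt_uniqueR _ _ _ _ (Hi a b)).
    assert (M1 <= b) by (eapply Rle_trans; [apply Rmax_l|exact Hb]).
    assert (a <= M2) by (pose proof (Rmax_r M1 (- M2)); lra).
    specialize (HM1 b H0). specialize (HM2 a H1).
    replace (H b - H a - (Lp - Lm)) with ((H b - Lp) - (H a - Lm)) by ring.
    eapply Rle_lt_trans. apply Rabs_sub_le. lra.
Qed.

Definition K1 (g c : R) : R := exp (c * c / (4 * g)) * (sqrt PI / sqrt g).

Lemma gauss1d g c A B C : 0 < g -> ImproperInt (hfun g c A B C) (A * K1 g c).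
Proof.
  intros Hg. pose proof (sqrt_lt_R0 g Hg) as Hs.
  set (k := exp (c * c / (4 * g)) / sqrt g).
  replace (A * K1 g c) with ((A * (k * (sqrt PI / 2)) + 0) - (A * (k * (- (sqrt PI / 2))) + 0))
    by (unfold K1, k; field; lra).
  apply improper_prim with (H := Hprim g c A B C).
  - intros; apply Hprim_derive; auto.
  - intros; apply hfun_cont.
  - unfold Hprim. apply lim_p_plus.
    + apply lim_p_scal. unfold G0. fold k. apply lim_p_scal.
      apply (lim_p_lin Phi). auto. apply Phi_lim_p.
    + apply E1_decay; auto.
  - apply lim_m_of_p.
    apply lim_p_ext with (f := fun y => A * (k * (fun z => Phi (- z)) (sqrt g * y + (c / (2 * sqrt g))))
                                       + (B + (- C) * y) * E1 g (- c) y).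
    { intros y. unfold Hprim, G0, E1. fold k. f_equal.
      - f_equal. f_equal. f_equal. ring.
      - f_equal. ring. f_equal. ring. }
    apply lim_p_plus.
    + apply lim_p_scal. apply lim_p_scal.
      apply (lim_p_lin (fun z => Phi (- z))). auto. apply lim_p_of_m. apply Phi_lim_m.
    + apply E1_decay; auto.
Qed.

Lemma RInt_plusR (f g : R -> R) a b : ex_RInt f a b -> ex_RInt g a b ->
  RInt (fun x => f x + g x) a b = RInt f a b + RInt g a b.
Proof. intros. exact (@RInt_plus R_CompleteNormedModule f g a b H H0). Qed.

Lemma ex_RInt_plusR (f g : R -> R) a b : ex_RInt f a b -> ex_RInt g a b ->
  ex_RInt (fun x => f x + g x) a b.
Proof. intros. exact (@ex_RInt_plus R_CompleteNormedModule f g a b H H0). Qed.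

Lemma ex_RInt_scalR (f : R -> R) a b k : ex_RInt f a b -> ex_RInt (fun x => k * f x) a b.
Proof. intros. exact (@ex_RInt_scal R_CompleteNormedModule f a b k H). Qed.

Lemma ImproperInt_unique g v1 v2 : ImproperInt g v1 -> ImproperInt g v2 -> v1 = v2.
Proof.
  intros [Hr H1] [_ H2]. apply Rminus_diag_uniq. apply Rabs_eq_0.
  destruct (Rle_lt_or_eq_dec 0 (Rabs (v1 - v2)) (Rabs_pos _)) as [Hlt|Heq]; [|auto].
  exfalso. set (e := Rabs (v1 - v2) / 2).
  destruct (H1 e ltac:(unfold e; lra)) as [M1 HM1]. destruct (H2 e ltac:(unfold e; lra)) as [M2 HM2].
  set (M := Rmax (Rabs M1) (Rabs M2)).
  assert (HM1' : Rabs M1 <= M) by apply Rmax_l. assert (HM2' : Rabs M2 <= M) by apply Rmax_r.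
  pose proof (Rle_abs M1). pose proof (Rle_abs M2).
  destruct (Hr (- M) M) as [pr _].
  specialize (HM1 (- M) M pr ltac:(lra) ltac:(lra)). specialize (HM2 (- M) M pr ltac:(lra) ltac:(lra)).
  assert (Rabs (v1 - v2) <= Rabs (RiemannInt pr - v2) + Rabs (RiemannInt pr - v1)).
  { replace (v1 - v2) with ((RiemannInt pr - v2) - (RiemannInt pr - v1)) by ring. apply Rabs_sub_le. }
  unfold e in *. lra.
Qed.

Lemma ImproperInt_plus f g a b : ImproperInt f a -> ImproperInt g b -> ImproperInt (fun x => f x + g x) (a + b).
Proof.
  intros [Hf1 Hf2] [Hg1 Hg2]. split.
  - intros u v. destruct (Hf1 u v) as [p1 _]. destruct (Hg1 u v) as [p2 _].
    exists (ex_RInt_Reals_0 _ _ _ (ex_RInt_plusR _ _ _ _ (ex_RInt_Reals_1 _ _ _ p1) (ex_RInt_Reals_1 _ _ _ p2))). exact I.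
  - intros eps He. destruct (Hf2 (eps/2) ltac:(lra)) as [M1 HM1]. destruct (Hg2 (eps/2) ltac:(lra)) as [M2 HM2].
    exists (Rmax M1 M2). intros u v pr Hu Hv.
    pose proof (Rmax_l M1 M2). pose proof (Rmax_r M1 M2).
    destruct (Hf1 u v) as [p1 _]. destruct (Hg1 u v) as [p2 _].
    specialize (HM1 u v p1 ltac:(lra) ltac:(lra)). specialize (HM2 u v p2 ltac:(lra) ltac:(lra)).
    rewrite <- RInt_Reals. rewrite RInt_plusR by (apply ex_RInt_Reals_1; auto).
    rewrite (RInt_Reals f u v p1), (RInt_Reals g u v p2).
    replace (RiemannInt p1 + RiemannInt p2 - (a + b)) with ((RiemannInt p1 - a) + (RiemannInt p2 - b)) by ring.
    eapply Rle_lt_trans. apply Rabs_triang. lra.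
Qed.

Lemma ImproperInt_scal f a k : ImproperInt f a -> ImproperInt (fun x => k * f x) (k * a).
Proof.
  intros [Hf1 Hf2]. split.
  - intros u v. destruct (Hf1 u v) as [p1 _].
    exists (ex_RInt_Reals_0 _ _ _ (ex_RInt_scalR _ _ _ k (ex_RInt_Reals_1 _ _ _ p1))). exact I.
  - intros eps He. destruct (Hf2 (eps / (Rabs k + 1))) as [M HM].
    { apply Rdiv_lt_0_compat; auto. pose proof (Rabs_pos k); lra. }
    exists M. intros u v pr Hu Hv. destruct (Hf1 u v) as [p1 _].
    specialize (HM u v p1 Hu Hv).
    rewrite <- RInt_Reals. rewrite RInt_scalR by (apply ex_RInt_Reals_1; auto).
    rewrite (RInt_Reals f u v p1).
    replace (k * RiemannInt p1 - k * a) with (k * (RiemannInt p1 - a)) by ring. rewrite Rabs_mult.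
    pose proof (Rabs_pos k). pose proof (Rabs_pos (RiemannInt p1 - a)).
    apply Rle_lt_trans with ((Rabs k + 1) * Rabs (RiemannInt p1 - a)). nra.
    replace eps with ((Rabs k + 1) * (eps / (Rabs k + 1))) by (field; lra).
    apply Rmult_lt_compat_l; lra.
Qed.

Lemma ImproperInt_zero : ImproperInt (fun _ => 0) 0.
Proof.
  assert (H := improper_prim (fun _ => 0) (fun _ => 0) 0 0). rewrite Rminus_0_r in H. apply H.
  - intros. apply (@is_derive_const R_AbsRing R_NormedModule).
  - intros. apply contR_der. auto_derive. auto.
  - apply lim_p_const.
  - apply lim_m_of_p. apply lim_p_const.
Qed.

Lemma IntRd_unique d : forall F v1 v2, IntRd d F v1 -> IntRd d F v2 -> v1 = v2.
Proof.
  induction d as [|d IH]; simpl; intros F v1 v2 H1 H2.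
  - congruence.
  - destruct H1 as [g1 [Hg1 Hi1]]. destruct H2 as [g2 [Hg2 Hi2]].
    assert (g1 = g2). { apply functional_extensionality. intros x. eapply IH; eauto. }
    subst. eapply ImproperInt_unique; eauto.
Qed.

Lemma IntRd_scal d : forall F v k, IntRd d F v -> IntRd d (fun t => k * F t) (k * v).
Proof.
  induction d as [|d IH]; simpl; intros F v k H.
  - congruence.
  - destruct H as [g [Hg Hi]]. exists (fun x => k * g x). split.
    + intros x. apply (IH (fun t => F (vcons x t))). auto.
    + apply ImproperInt_scal; auto.
Qed.

Lemma IntRd_plus d : forall F G v w, IntRd d F v -> IntRd d G w -> IntRd d (fun t => F t + G t) (v + w).
Proof.
  induction d as [|d IH]; simpl; intros F G v w H1 H2.
  - congruence.
  - destruct H1 as [g [Hg Hi]]. destruct H2 as [h [Hh Hj]]. exists (fun x => g x + h x). split.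
    + intros x. apply (IH (fun t => F (vcons x t)) (fun t => G (vcons x t))); auto.
    + apply ImproperInt_plus; auto.
Qed.

Lemma IntRd_zero d : IntRd d (fun _ => 0) 0.
Proof.
  induction d as [|d IH]; simpl.
  - reflexivity.
  - exists (fun _ => 0). split. intros; auto. apply ImproperInt_zero.
Qed.

Lemma IntRd_rsum d m : forall F v, (forall i, (i < m)%nat -> IntRd d (F i) (v i)) ->
  IntRd d (fun t => rsum m (fun i => F i t)) (rsum m v).
Proof.
  induction m as [|m IH]; simpl; intros F v H.
  - apply IntRd_zero.
  - apply (IntRd_plus d (fun t => rsum m (fun i => F i t)) (F m)).
    + apply IH. intros; apply H; lia.
    + apply H; lia.
Qed.

Fixpoint rprod (n : nat) (f : nat -> R) : R :=
  match n with O => 1 | S k => rprod k f * f k end.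

Lemma rprod_shift n f : rprod (S n) f = f 0%nat * rprod n (fun l => f (S l)).
Proof.
  induction n as [|n IH]. simpl. ring.
  change (rprod (S (S n)) f) with (rprod (S n) f * f (S n)). rewrite IH. simpl. ring.
Qed.

Lemma rsum_shift n f : rsum (S n) f = f 0%nat + rsum n (fun l => f (S l)).
Proof.
  induction n as [|n IH]. simpl. ring.
  change (rsum (S (S n)) f) with (rsum (S n) f + f (S n)). rewrite IH. simpl. ring.
Qed.

Lemma IntRd_prod d : forall (h : nat -> R -> R) (I : nat -> R),
  (forall l, (l < d)%nat -> ImproperInt (h l) (I l)) ->
  IntRd d (fun t => rprod d (fun l => h l (t l))) (rprod d I).
Proof.
  induction d as [|d IH]; intros h I H.
  - simpl. reflexivity.
  - exists (fun x => h 0%nat x * rprod d (fun l => I (S l))). split.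
    + intros x. cbv beta.
      replace (fun t => rprod (S d) (fun l => h l (vcons x t l)))
        with (fun t => h 0%nat x * rprod d (fun l => h (S l) (t l))).
      * apply (IntRd_scal d (fun t => rprod d (fun l => h (S l) (t l)))).
        apply (IH (fun l => h (S l)) (fun l => I (S l))). intros; apply H; lia.
      * apply functional_extensionality. intros t. rewrite rprod_shift. reflexivity.
    + rewrite rprod_shift.
      replace (fun x => h 0%nat x * rprod d (fun l => I (S l))) with (fun x => rprod d (fun l => I (S l)) * h 0%nat x)
        by (apply functional_extensionality; intros; ring).
      rewrite Rmult_comm. apply ImproperInt_scal. apply H. lia.
Qed.

Lemma rsum_ext n f g : (forall i, (i < n)%nat -> f i = g i) -> rsum n f = rsum n g.
Proof. induction n; simpl; intros H; auto. rewrite IHn by (intros; apply H; lia). rewrite H by lia. auto. Qed.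

Lemma rsum_scal n k f : k * rsum n f = rsum n (fun i => k * f i).
Proof. induction n; simpl. ring. rewrite <- IHn. ring. Qed.

Lemma rsum_plus n f g : rsum n (fun i => f i + g i) = rsum n f + rsum n g.
Proof. induction n; simpl. ring. rewrite IHn. ring. Qed.

Lemma rsum_minus n f g : rsum n (fun i => f i - g i) = rsum n f - rsum n g.
Proof. induction n; simpl. ring. rewrite IHn. ring. Qed.

Lemma rsum_const n c : rsum n (fun _ => c) = INR n * c.
Proof. induction n; cbn [rsum]. simpl; ring. rewrite IHn. rewrite S_INR. ring. Qed.

Lemma rsum_mult n m f g : rsum n f * rsum m g = rsum n (fun j => rsum m (fun k => f j * g k)).
Proof.
  induction n; simpl. ring. rewrite Rmult_plus_distr_r, IHn. f_equal. apply rsum_scal.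
Qed.

Lemma rsum_swap n m (f : nat -> nat -> R) : rsum n (fun i => rsum m (fun j => f i j)) = rsum m (fun j => rsum n (fun i => f i j)).
Proof.
  induction n; simpl. induction m; simpl; auto. rewrite <- IHm. ring.
  rewrite IHn. rewrite <- rsum_plus. auto.
Qed.

Lemma exp_rsum n f : exp (rsum n f) = rprod n (fun l => exp (f l)).
Proof. induction n; simpl. apply exp_0. rewrite exp_plus, IHn. auto. Qed.

Lemma rprod_mult n f g : rprod n (fun l => f l * g l) = rprod n f * rprod n g.
Proof. induction n; simpl. ring. rewrite IHn. ring. Qed.

Lemma rprod_ext n f g : (forall i, (i < n)%nat -> f i = g i) -> rprod n f = rprod n g.
Proof. induction n; simpl; intros H; auto. rewrite IHn by (intros; apply H; lia). rewrite H by lia. auto. Qed.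

Lemma rprod_const n c : rprod n (fun _ => c) = c ^ n.
Proof. induction n; simpl. auto. rewrite IHn. ring. Qed.

Lemma rprod_pick_f n i (a : nat -> R) : (i < n)%nat -> rprod n (fun l => if Nat.eqb l i then a l else 1) = a i.
Proof.
  induction n; intros H. lia. simpl.
  destruct (Nat.eq_dec i n).
  - subst. rewrite Nat.eqb_refl. rewrite (rprod_ext n _ (fun _ => 1)).
    + rewrite rprod_const, pow1. ring.
    + intros l Hl. destruct (Nat.eqb_spec l n); [lia|auto].
  - rewrite IHn by lia. destruct (Nat.eqb_spec n i); [lia|ring].
Qed.


Lemma sq_sum_scal n c w f : w * (c * rsum n f) ^ 2 = rsum n (fun j => rsum n (fun k => c * c * (f j * f k * w))).
Proof.
  replace (w * (c * rsum n f) ^ 2) with ((c * c * w) * (rsum n f * rsum n f)) by ring.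
  rewrite rsum_mult, rsum_scal. apply rsum_ext; intros. rewrite rsum_scal. apply rsum_ext; intros; ring.
Qed.

Lemma rprod_pick n i a : (i < n)%nat -> rprod n (fun l => if Nat.eqb l i then a else 1) = a.
Proof. apply (rprod_pick_f n i (fun _ => a)). Qed.

Section Integrand.
Variables (n d : nat) (Y : nat -> nat -> R) (g : R).

Definition sjk (j k l : nat) : R := Y j l + Y k l.

Definition hf (i j k l : nat) (x : R) : R :=
  (if Nat.eqb l i then (Y j i - x) * (Y k i - x) else 1) * E1 g (sjk j k l) x.

Definition Acoef (i j k : nat) : R :=
  Y j i * Y k i + / (2 * g) - sjk j k i * sjk j k i / (2 * g) + sjk j k i * sjk j k i / (4 * (g * g)).

Lemma integrand_eq t : (0 < n)%nat ->
  integrand n d Y g t =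
  rsum d (fun i => rsum n (fun j => rsum n (fun k =>
    / (INR n * INR n) * rprod d (fun l => hf i j k l (t l))))).
Proof.
  intros Hn. assert (HnR : INR n <> 0) by (apply not_0_INR; lia).
  unfold integrand. rewrite Rmult_comm, rsum_scal. apply rsum_ext. intros i Hi.
  assert (Hd : Mn_grad n d Y t i - t i * Mn n d Y t =
               / INR n * rsum n (fun j => (Y j i - t i) * exp (dot d t (Y j)))).
  { unfold Mn_grad, Mn.
    rewrite (rsum_ext n (fun j => (Y j i - t i) * exp (dot d t (Y j))) (fun j => Y j i * exp (dot d t (Y j)) - t i * exp (dot d t (Y j)))) by (intros; ring).
    rewrite rsum_minus, <- rsum_scal. ring. }
  rewrite Hd. rewrite sq_sum_scal. apply rsum_ext. intros j Hj. apply rsum_ext. intros k Hk.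
  rewrite <- Rinv_mult. f_equal.
  unfold hf. rewrite rprod_mult.
  rewrite (rprod_pick_f d i (fun l => (Y j i - t l) * (Y k i - t l))) by auto.
  unfold E1. rewrite <- exp_rsum.
  replace ((Y j i - t i) * exp (dot d t (Y j)) * ((Y k i - t i) * exp (dot d t (Y k))) * exp (- g * nrm2 d t))
    with ((Y j i - t i) * (Y k i - t i) * (exp (dot d t (Y j)) * exp (dot d t (Y k)) * exp (- g * nrm2 d t))) by ring.
  f_equal. rewrite <- !exp_plus. f_equal.
  unfold nrm2, dot. rewrite rsum_scal, <- !rsum_plus. apply rsum_ext. intros l _. unfold sjk. ring.
Qed.

Lemma hf_int i j k l : 0 < g ->
  ImproperInt (hf i j k l) ((if Nat.eqb l i then Acoef i j k else 1) * K1 g (sjk j k l)).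
Proof.
  intros Hg. destruct (Nat.eqb_spec l i).
  - subst l. set (c := sjk j k i).
    replace (hf i j k i) with (hfun g c (Acoef i j k) ((c - c / (2 * g)) / (2 * g)) (- / (2 * g))).
    + apply gauss1d; auto.
    + apply functional_extensionality. intros x. unfold hf, hfun. rewrite Nat.eqb_refl. fold c.
      f_equal. unfold Acoef. fold c. unfold c, sjk. field. lra.
  - replace (hf i j k l) with (hfun g (sjk j k l) 1 0 0).
    + apply gauss1d; auto.
    + apply functional_extensionality. intros x. unfold hf, hfun.
      destruct (Nat.eqb_spec l i); [lia|]. f_equal. ring.
Qed.

Definition Ival : R :=
  rsum d (fun i => rsum n (fun j => rsum n (fun k =>
    / (INR n * INR n) * rprod d (fun l => (if Nat.eqb l i then Acoef i j k else 1) * K1 g (sjk j k l))))).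

Lemma IntRd_integrand : (0 < n)%nat -> 0 < g -> IntRd d (integrand n d Y g) Ival.
Proof.
  intros Hn Hg.
  replace (integrand n d Y g) with (fun t => rsum d (fun i => rsum n (fun j => rsum n (fun k =>
    / (INR n * INR n) * rprod d (fun l => hf i j k l (t l)))))).
  2:{ apply functional_extensionality. intros t. rewrite integrand_eq; auto. }
  unfold Ival.
  apply (IntRd_rsum d d (fun i t => rsum n (fun j => rsum n (fun k => / (INR n * INR n) * rprod d (fun l => hf i j k l (t l)))))).
  intros i Hi.
  apply (IntRd_rsum d n (fun j t => rsum n (fun k => / (INR n * INR n) * rprod d (fun l => hf i j k l (t l))))).
  intros j Hj.
  apply (IntRd_rsum d n (fun k t => / (INR n * INR n) * rprod d (fun l => hf i j k l (t l)))).
  intros k Hk.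
  apply (IntRd_scal d (fun t => rprod d (fun l => hf i j k l (t l)))).
  apply (IntRd_prod d (hf i j k) (fun l => (if Nat.eqb l i then Acoef i j k else 1) * K1 g (sjk j k l))).
  intros l _. apply hf_int; auto.
Qed.

End Integrand.

Lemma exp_taylor2 x : 0 <= x -> Rabs (exp x - 1 - x - x * x / 2) <= x * x * x * exp x / 6.
Proof.
  intros Hx. destruct (Rle_lt_or_eq_dec 0 x Hx) as [Hp|H0].
  2:{ rewrite <- H0, exp_0. replace (1 - 1 - 0 - 0 * 0 / 2) with 0 by field. rewrite Rabs_R0. lra. }
  destruct (Taylor_Lagrange exp 2 0 x Hp) as [z [Hz He]].
  { intros t _ k _. destruct k. exact I. exists (exp t). apply (is_derive_n_exp (S k) t). }
  assert (D : forall m y, Derive_n exp m y = exp y) by (intros; apply is_derive_n_unique, is_derive_n_exp).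
  cbn [sum_f_R0] in He. rewrite !D in He. simpl in He. rewrite exp_0 in He.
  assert (Hr : exp x - 1 - x - x * x / 2 = x * x * x * exp z / 6).
  { rewrite He. field. }
  rewrite Hr. rewrite Rabs_pos_eq.
  - apply Rmult_le_compat_r. lra. apply Rmult_le_compat_l. apply Rmult_le_pos; [apply Rmult_le_pos|]; lra.
    apply exp_le. lra.
  - pose proof (exp_pos z). apply Rmult_le_pos; [|lra]. apply Rmult_le_pos; [|lra]. nra.
Qed.

Lemma Rabs_triang3 x y z : Rabs (x + y + z) <= Rabs x + Rabs y + Rabs z.
Proof. eapply Rle_trans. apply Rabs_triang. pose proof (Rabs_triang x y). lra. Qed.

Lemma term_bound (a S dd g : R) : 0 <= S -> 1 <= g ->
  Rabs (g * g * ((a + dd / (2 * g) - S / (2 * g) + S / (4 * (g * g))) * exp (S / (4 * g)))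
        - (g * g * a + g * (a * (S/4) + (dd/2 - 2*(S/4))) + (a * (S/4) * (S/4) / 2 + (dd/2 - 2*(S/4)) * (S/4) + (S/4))))
  <= (Rabs ((dd/2 - 2*(S/4)) * (S/4) * (S/4) / 2 + (S/4) * (S/4)) + Rabs ((S/4) * (S/4) * (S/4) / 2)
      + (Rabs a + Rabs (dd/2 - 2*(S/4)) + (S/4)) * ((S/4) * (S/4) * (S/4) * exp (S/4) / 6)) / g.
Proof.
  intros HS Hg. assert (Hg0 : g <> 0) by lra.
  set (u := S / 4). set (be := dd / 2 - 2 * u).
  assert (Hu : 0 <= u) by (unfold u; lra).
  set (x := S / (4 * g)).
  assert (Hx : x = u / g) by (unfold x, u; field; lra).
  assert (Hx0 : 0 <= x) by (rewrite Hx; apply Rdiv_le_0_compat; lra).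
  set (Rt := exp x - 1 - x - x * x / 2).
  assert (Hid : g * g * ((a + dd / (2 * g) - S / (2 * g) + S / (4 * (g * g))) * exp x)
        - (g * g * a + g * (a * u + be) + (a * u * u / 2 + be * u + u))
        = (be * u * u / 2 + u * u) / g + (u * u * u / 2) / (g * g) + (g * g * (a + be / g + u / (g * g))) * Rt).
  { unfold Rt. rewrite Hx. unfold be, u. field. lra. }
  rewrite Hid. eapply Rle_trans. apply Rabs_triang3.
  assert (H1 : Rabs ((be * u * u / 2 + u * u) / g) = Rabs (be * u * u / 2 + u * u) / g).
  { unfold Rdiv. rewrite Rabs_mult, Rabs_inv, (Rabs_pos_eq g) by lra. auto. }
  assert (H2 : Rabs (u * u * u / 2 / (g * g)) <= Rabs (u * u * u / 2) / g).
  { unfold Rdiv at 1. rewrite Rabs_mult, Rabs_inv, (Rabs_pos_eq (g * g)) by nra.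
    unfold Rdiv. apply Rmult_le_compat_l. apply Rabs_pos. apply Rinv_le_contravar; nra. }
  assert (HR := exp_taylor2 x Hx0). fold Rt in HR.
  assert (Hug : u / g <= u) by (apply Rmult_le_reg_r with g; [lra|]; replace (u / g * g) with u by (field; lra); nra).
  assert (Hex : exp x <= exp u) by (apply exp_le; rewrite Hx; auto).
  assert (Hc : Rabs (a + be / g + u / (g * g)) <= Rabs a + Rabs be + u).
  { eapply Rle_trans. apply Rabs_triang3.
    assert (Rabs (be / g) <= Rabs be).
    { unfold Rdiv. rewrite Rabs_mult, Rabs_inv, (Rabs_pos_eq g) by lra.
      rewrite <- (Rmult_1_r (Rabs be)) at 2. apply Rmult_le_compat_l. apply Rabs_pos.
      rewrite <- Rinv_1. apply Rinv_le_contravar; lra. }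
    assert (Rabs (u / (g * g)) <= u).
    { rewrite Rabs_pos_eq by (apply Rdiv_le_0_compat; nra).
      apply Rmult_le_reg_r with (g * g). nra. replace (u / (g * g) * (g * g)) with u by (field; auto). clear -Hu Hg. clearbody u. assert (0 <= u * g) by nra. nra. }
    lra. }
  assert (H3 : Rabs (g * g * (a + be / g + u / (g * g)) * Rt) <= (Rabs a + Rabs be + u) * (u * u * u * exp u / 6) / g).
  { rewrite !Rabs_mult. rewrite (Rabs_pos_eq g) by lra.
    assert (Hxg : x * x * x * exp x / 6 = (u * u * u * exp x / 6) / (g * g * g)) by (rewrite Hx; field; lra).
    rewrite Hxg in HR.
    apply Rle_trans with (g * g * (Rabs a + Rabs be + u) * ((u * u * u * exp x / 6) / (g * g * g))).
    - apply Rmult_le_compat. 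
      + apply Rmult_le_pos; [nra| apply Rabs_pos].
      + apply Rabs_pos.
      + apply Rmult_le_compat_l. nra. auto.
      + auto.
    - replace (g * g * (Rabs a + Rabs be + u) * (u * u * u * exp x / 6 / (g * g * g)))
        with ((Rabs a + Rabs be + u) * (u * u * u * exp x / 6) / g) by (field; lra).
      unfold Rdiv. apply Rmult_le_compat_r. left; apply Rinv_0_lt_compat; lra.
      apply Rmult_le_compat_l. pose proof (Rabs_pos a); pose proof (Rabs_pos be); lra.
      apply Rmult_le_compat_r. lra. apply Rmult_le_compat_l. nra. auto. }
  unfold Rdiv in *. lra.
Qed.

Definition D2 (n : nat) (f : nat -> nat -> R) : R := rsum n (fun j => rsum n (fun k => f j k)).

Lemma D2_plus n f g : D2 n (fun j k => f j k + g j k) = D2 n f + D2 n g.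
Proof. unfold D2. rewrite <- rsum_plus. apply rsum_ext. intros. apply rsum_plus. Qed.

Lemma D2_scal n c f : D2 n (fun j k => c * f j k) = c * D2 n f.
Proof. unfold D2. rewrite rsum_scal. apply rsum_ext. intros. symmetry. apply rsum_scal. Qed.

Lemma D2_ext n f g : (forall j k, (j < n)%nat -> (k < n)%nat -> f j k = g j k) -> D2 n f = D2 n g.
Proof. intros H. unfold D2. apply rsum_ext. intros. apply rsum_ext. intros. auto. Qed.

Lemma rsum_abs_le n f h : (forall i, (i < n)%nat -> Rabs (f i) <= h i) -> Rabs (rsum n f) <= rsum n h.
Proof.
  induction n; simpl; intros H. rewrite Rabs_R0. lra.
  eapply Rle_trans. apply Rabs_triang. pose proof (H n ltac:(lia)). pose proof (IHn ltac:(intros; apply H; lia)). lra.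
Qed.

Lemma rsum_nonneg n f : (forall i, (i < n)%nat -> 0 <= f i) -> 0 <= rsum n f.
Proof. induction n; simpl; intros H. lra. pose proof (H n ltac:(lia)). pose proof (IHn ltac:(intros; apply H; lia)). lra. Qed.

Lemma D2_abs_le n f h : (forall j k, (j < n)%nat -> (k < n)%nat -> Rabs (f j k) <= h j k) -> Rabs (D2 n f) <= D2 n h.
Proof.
  intros H. unfold D2. apply rsum_abs_le. intros j Hj. apply rsum_abs_le. intros k Hk. auto.
Qed.

Definition c2f (a S dd : R) : R := a * (S/4) * (S/4) / 2 + (dd/2 - 2*(S/4)) * (S/4) + (S/4).
Definition Cf (a S dd : R) : R :=
  Rabs ((dd/2 - 2*(S/4)) * (S/4) * (S/4) / 2 + (S/4) * (S/4)) + Rabs ((S/4) * (S/4) * (S/4) / 2)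
      + (Rabs a + Rabs (dd/2 - 2*(S/4)) + (S/4)) * ((S/4) * (S/4) * (S/4) * exp (S/4) / 6).

Lemma Cf_nonneg a S dd : 0 <= S -> 0 <= Cf a S dd.
Proof.
  intros HS. unfold Cf. pose proof (Rabs_pos a). pose proof (Rabs_pos (dd/2 - 2*(S/4))).
  pose proof (Rabs_pos ((dd/2 - 2*(S/4)) * (S/4) * (S/4) / 2 + (S/4) * (S/4))).
  pose proof (Rabs_pos ((S/4) * (S/4) * (S/4) / 2)). pose proof (exp_pos (S/4)).
  assert (0 <= (S/4) * (S/4) * (S/4) * exp (S/4) / 6).
  { apply Rmult_le_pos; [|lra]. apply Rmult_le_pos; [|lra]. apply Rmult_le_pos; [|lra]. nra. }
  assert (0 <= Rabs a + Rabs (dd/2 - 2*(S/4)) + (S/4)) by lra.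
  pose proof (Rmult_le_pos _ _ H5 H4). lra.
Qed.

Lemma limit_core n (a S : nat -> nat -> R) dd L :
  (0 < n)%nat -> (forall j k, 0 <= S j k) ->
  D2 n a = 0 ->
  D2 n (fun j k => a j k * (S j k / 4) + (dd/2 - 2*(S j k/4))) = 0 ->
  16 / (INR n * INR n) * D2 n (fun j k => c2f (a j k) (S j k) dd) = L ->
  forall eps, 0 < eps -> exists M, forall g, M < g ->
    Rabs (16 * (g * g) / (INR n * INR n) *
      D2 n (fun j k => (a j k + dd / (2 * g) - S j k / (2 * g) + S j k / (4 * (g * g))) * exp (S j k / (4 * g))) - L) < eps.
Proof.
  intros Hn HS Ha Hb HL eps He.
  assert (HnR : 0 < INR n) by (apply lt_0_INR; lia).
  set (c := 16 / (INR n * INR n)).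
  assert (Hc : 0 < c) by (unfold c; apply Rdiv_lt_0_compat; nra).
  set (Ct := D2 n (fun j k => Cf (a j k) (S j k) dd)).
  assert (HCt : 0 <= Ct) by (unfold Ct, D2; apply rsum_nonneg; intros; apply rsum_nonneg; intros; apply Cf_nonneg; auto).
  exists (Rmax 1 (c * Ct / eps)). intros g Hg.
  assert (Hg1 : 1 < g) by (pose proof (Rmax_l 1 (c * Ct / eps)); lra).
  assert (Hg2 : c * Ct / eps < g) by (pose proof (Rmax_r 1 (c * Ct / eps)); lra).
  set (term := fun j k => g * g * ((a j k + dd / (2 * g) - S j k / (2 * g) + S j k / (4 * (g * g))) * exp (S j k / (4 * g)))).
  set (main := fun j k => g * g * a j k + g * (a j k * (S j k / 4) + (dd/2 - 2*(S j k/4))) + c2f (a j k) (S j k) dd).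
  assert (Hsplit : 16 * (g * g) / (INR n * INR n) *
      D2 n (fun j k => (a j k + dd / (2 * g) - S j k / (2 * g) + S j k / (4 * (g * g))) * exp (S j k / (4 * g))) - L
      = c * D2 n (fun j k => term j k - main j k)).
  { rewrite <- HL.
    assert (E1' : D2 n term = D2 n (fun j k => term j k - main j k) + D2 n main).
    { rewrite <- D2_plus. apply D2_ext. intros; ring. }
    assert (E2 : D2 n main = (g * g) * D2 n a + g * D2 n (fun j k => a j k * (S j k / 4) + (dd/2 - 2*(S j k/4)))
                 + D2 n (fun j k => c2f (a j k) (S j k) dd)).
    { unfold main.
      rewrite (D2_plus n (fun j k => g * g * a j k + g * (a j k * (S j k / 4) + (dd/2 - 2*(S j k/4))))
                          (fun j k => c2f (a j k) (S j k) dd)).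
      rewrite (D2_plus n (fun j k => g * g * a j k) (fun j k => g * (a j k * (S j k / 4) + (dd/2 - 2*(S j k/4))))).
      rewrite (D2_scal n (g * g) a).
      rewrite (D2_scal n g (fun j k => a j k * (S j k / 4) + (dd/2 - 2*(S j k/4)))). reflexivity. }
    rewrite Ha, Hb in E2.
    assert (E3 : 16 * (g * g) / (INR n * INR n) *
      D2 n (fun j k => (a j k + dd / (2 * g) - S j k / (2 * g) + S j k / (4 * (g * g))) * exp (S j k / (4 * g)))
      = c * D2 n term).
    { unfold term. rewrite D2_scal. unfold c. field. lra. }
    rewrite E3, E1', E2. fold c. ring. }
  rewrite Hsplit. rewrite Rabs_mult, (Rabs_pos_eq c) by lra.
  assert (Hb2 : Rabs (D2 n (fun j k => term j k - main j k)) <= D2 n (fun j k => Cf (a j k) (S j k) dd / g)).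
  { apply D2_abs_le. intros j k _ _. unfold term, main. apply term_bound; auto. lra. }
  assert (HD : D2 n (fun j k => Cf (a j k) (S j k) dd / g) = Ct / g).
  { unfold Rdiv. rewrite (D2_ext n _ (fun j k => / g * Cf (a j k) (S j k) dd)) by (intros; ring).
    rewrite D2_scal. fold Ct. ring. }
  rewrite HD in Hb2.
  apply Rle_lt_trans with (c * (Ct / g)). apply Rmult_le_compat_l; lra.
  apply Rmult_lt_reg_r with g. lra.
  replace (c * (Ct / g) * g) with (c * Ct) by (field; lra).
  apply Rmult_lt_compat_l with (r := eps) in Hg2; auto.
  replace (eps * (c * Ct / eps)) with (c * Ct) in Hg2 by (field; lra). lra.
Qed.

Lemma pow_divR a b n : b <> 0 -> (a / b) ^ n = a ^ n / b ^ n.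
Proof. intros Hb. induction n; simpl. field. rewrite IHn. field. split; auto. apply pow_nonzero; auto. Qed.

Lemma sqrt_pow_Rpower x n : 0 < x -> sqrt x ^ n = Rpower x (INR n / 2).
Proof.
  intros Hx. rewrite <- Rpower_sqrt by auto. rewrite <- Rpower_pow.
  rewrite Rpower_mult. f_equal. field. unfold Rpower. apply exp_pos.
Qed.

Lemma Rpower_pos x y : 0 < Rpower x y.
Proof. unfold Rpower. apply exp_pos. Qed.

Section Val.
Variables (n d : nat) (Y : nat -> nat -> R).

Definition dotjk (j k : nat) : R := dot d (Y j) (Y k).
Definition SS (j k : nat) : R := rsum d (fun l => sjk Y j k l * sjk Y j k l).

Lemma rprod_K1 g j k : 0 < g ->
  rprod d (fun l => K1 g (sjk Y j k l)) = exp (SS j k / (4 * g)) * (sqrt PI / sqrt g) ^ d.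
Proof.
  intros Hg. unfold K1. rewrite rprod_mult, rprod_const. f_equal.
  rewrite <- exp_rsum. f_equal. unfold SS. unfold Rdiv. rewrite (Rmult_comm (rsum _ _)), rsum_scal.
  apply rsum_ext. intros; ring.
Qed.

Lemma Ival_simpl g : 0 < g ->
  Ival n d Y g = (sqrt PI / sqrt g) ^ d / (INR n * INR n) *
    D2 n (fun j k => (dotjk j k + INR d / (2 * g) - SS j k / (2 * g) + SS j k / (4 * (g * g))) * exp (SS j k / (4 * g))).
Proof.
  intros Hg. unfold Ival.
  rewrite (rsum_ext d _ (fun i => rsum n (fun j => rsum n (fun k =>
     / (INR n * INR n) * (sqrt PI / sqrt g) ^ d * (Acoef Y g i j k * exp (SS j k / (4 * g))))))).
  2:{ intros i Hi. apply rsum_ext. intros j _. apply rsum_ext. intros k _.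
      rewrite rprod_mult, rprod_pick by auto. rewrite rprod_K1 by auto. ring. }
  rewrite rsum_swap. unfold D2. rewrite rsum_scal. apply rsum_ext. intros j _.
  rewrite rsum_swap. rewrite rsum_scal. apply rsum_ext. intros k _.
  rewrite <- rsum_scal.
  replace (rsum d (fun i => Acoef Y g i j k * exp (SS j k / (4 * g))))
    with (rsum d (fun i => Acoef Y g i j k) * exp (SS j k / (4 * g))).
  2:{ rewrite Rmult_comm, rsum_scal. apply rsum_ext; intros; ring. }
  assert (Hs : rsum d (fun i => Acoef Y g i j k) = dotjk j k + INR d / (2 * g) - SS j k / (2 * g) + SS j k / (4 * (g * g))).
  { unfold Acoef. repeat (rewrite rsum_plus || rewrite rsum_minus). rewrite rsum_const.
    unfold dotjk, SS, dot.
    rewrite (rsum_ext d (fun i => sjk Y j k i * sjk Y j k i / (2 * g)) (fun i => / (2 * g) * (sjk Y j k i * sjk Y j k i))) by (intros; unfold Rdiv; ring).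
    rewrite (rsum_ext d (fun i => sjk Y j k i * sjk Y j k i / (4 * (g * g))) (fun i => / (4 * (g * g)) * (sjk Y j k i * sjk Y j k i))) by (intros; unfold Rdiv; ring).
    rewrite <- !rsum_scal. field. lra. }
  rewrite Hs. unfold Rdiv. ring.
Qed.

Lemma fexpr_eq g : 0 < g ->
  Rpower g (2 + INR d / 2) * (16 * (INR n * Ival n d Y g)) / (INR n * Rpower PI (INR d / 2))
  = 16 * (g * g) / (INR n * INR n) *
    D2 n (fun j k => (dotjk j k + INR d / (2 * g) - SS j k / (2 * g) + SS j k / (4 * (g * g))) * exp (SS j k / (4 * g))).
Proof.
  intros Hg. destruct (Nat.eq_dec n 0) as [H0|Hn0].
  - rewrite H0. unfold D2. simpl INR. simpl rsum. unfold Rdiv. ring.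
  - assert (Hm : 0 < INR n) by (apply lt_0_INR; lia).
    rewrite Ival_simpl by auto. rewrite pow_divR by (apply Rgt_not_eq, sqrt_lt_R0; auto).
    rewrite !sqrt_pow_Rpower by (auto; apply PI_RGT_0).
    rewrite Rpower_plus. replace 2 with (INR 2) at 1 by (simpl; ring). rewrite Rpower_pow by auto.
    pose proof (Rpower_pos PI (INR d / 2)). pose proof (Rpower_pos g (INR d / 2)).
    field. repeat split; lra.
Qed.

End Val.

Lemma rsum_pick_f n i (a : nat -> R) : (i < n)%nat -> rsum n (fun l => if Nat.eqb i l then a l else 0) = a i.
Proof.
  induction n; intros H. lia. simpl.
  destruct (Nat.eq_dec i n).
  - subst. rewrite Nat.eqb_refl. rewrite (rsum_ext n _ (fun _ => 0)).
    + rewrite rsum_const. ring.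
    + intros l Hl. destruct (Nat.eqb_spec n l); [lia|auto].
  - rewrite IHn by lia. destruct (Nat.eqb_spec i n); [lia|ring].
Qed.

Section Alg.
Variables (n d : nat) (Y : nat -> nat -> R).
Hypothesis H0 : forall i, (i < d)%nat -> rsum n (fun j => Y j i) = 0.
Hypothesis H1 : forall i m, (i < d)%nat -> (m < d)%nat ->
  rsum n (fun j => Y j i * Y j m) = if Nat.eqb i m then INR n else 0.

Notation aa := (dotjk d Y).

Lemma aa_sym j k : aa j k = aa k j.
Proof. unfold dotjk, dot. apply rsum_ext. intros; ring. Qed.

Lemma F1 j : rsum n (fun k => aa j k) = 0.
Proof.
  unfold dotjk, dot. rewrite rsum_swap.
  rewrite (rsum_ext d _ (fun _ => 0)). rewrite rsum_const. ring.
  intros i Hi. rewrite <- rsum_scal. rewrite H0 by auto. ring.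
Qed.

Lemma F1k k : rsum n (fun j => aa j k) = 0.
Proof. rewrite (rsum_ext n _ (fun j => aa k j)) by (intros; apply aa_sym). apply F1. Qed.

Lemma F2 j m : rsum n (fun k => aa j k * aa k m) = INR n * aa j m.
Proof.
  unfold dotjk, dot.
  transitivity (rsum n (fun k => rsum d (fun i => rsum d (fun l => Y j i * Y m l * (Y k i * Y k l))))).
  { apply rsum_ext. intros k _. rewrite rsum_mult. apply rsum_ext. intros i _. apply rsum_ext. intros; ring. }
  rewrite rsum_swap. rewrite rsum_scal.
  apply rsum_ext. intros i Hi. rewrite rsum_swap.
  rewrite (rsum_ext d _ (fun l => if Nat.eqb i l then INR n * (Y j i * Y m l) else 0)).
  - rewrite (rsum_pick_f d i (fun l => INR n * (Y j i * Y m l))) by auto. ring.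
  - intros l Hl. rewrite <- rsum_scal. rewrite H1 by auto. destruct (Nat.eqb i l); ring.
Qed.

Lemma F3 : rsum n (fun j => aa j j) = INR n * INR d.
Proof.
  unfold dotjk, dot. rewrite rsum_swap.
  rewrite (rsum_ext d _ (fun _ => INR n)). rewrite rsum_const. ring.
  intros i Hi. rewrite H1 by auto. rewrite Nat.eqb_refl. auto.
Qed.

Lemma SS_eq j k : SS d Y j k = aa j j + aa k k + 2 * aa j k.
Proof.
  unfold SS, dotjk, dot, sjk. rewrite <- !rsum_plus. rewrite rsum_scal, <- rsum_plus. apply rsum_ext. intros; ring.
Qed.

Lemma M_af f : D2 n (fun j k => aa j k * f j) = 0.
Proof.
  unfold D2. rewrite (rsum_ext n _ (fun _ => 0)). rewrite rsum_const. ring.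
  intros j _. rewrite (rsum_ext n _ (fun k => f j * aa j k)) by (intros; ring).
  rewrite <- rsum_scal, F1. ring.
Qed.

Lemma D2_swap f : D2 n (fun j k => f j k) = D2 n (fun j k => f k j).
Proof. unfold D2. apply rsum_swap. Qed.

Lemma M_afk f : D2 n (fun j k => aa j k * f k) = 0.
Proof.
  rewrite D2_swap. rewrite (D2_ext n _ (fun j k => aa j k * f j)). apply M_af.
  intros. rewrite aa_sym. auto.
Qed.

Lemma M_aaf f : D2 n (fun j k => aa j k * aa j k * f j) = INR n * rsum n (fun j => aa j j * f j).
Proof.
  unfold D2. rewrite rsum_scal. apply rsum_ext. intros j _.
  rewrite (rsum_ext n _ (fun k => f j * (aa j k * aa k j))) by (intros k _; rewrite (aa_sym k j); ring).
  rewrite <- rsum_scal, F2. ring.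
Qed.

Lemma M_aafk f : D2 n (fun j k => aa j k * aa j k * f k) = INR n * rsum n (fun j => aa j j * f j).
Proof.
  rewrite D2_swap. rewrite (D2_ext n _ (fun j k => aa j k * aa j k * f j)). apply M_aaf.
  intros. rewrite aa_sym. auto.
Qed.

Lemma M_fg f g : D2 n (fun j k => f j * g k) = rsum n f * rsum n g.
Proof. unfold D2. rewrite rsum_mult. auto. Qed.

Lemma M_f f : D2 n (fun j k => f j) = INR n * rsum n f.
Proof.
  unfold D2. rewrite (rsum_ext n _ (fun j => INR n * f j)). rewrite <- rsum_scal. auto.
  intros. rewrite rsum_const. ring.
Qed.

Lemma M_fk f : D2 n (fun j k => f k) = INR n * rsum n f.
Proof. rewrite D2_swap. apply M_f. Qed.

Definition P2 := rsum n (fun j => aa j j * aa j j).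
Definition A3 := D2 n (fun j k => aa j k * aa j k * aa j k).
Definition Bt := D2 n (fun j k => aa j k * aa j j * aa k k).

Lemma Ma : D2 n (fun j k => aa j k) = 0.
Proof. rewrite (D2_ext n _ (fun j k => aa j k * (fun _ => 1) j)) by (intros; simpl; ring). apply M_af. Qed.
Lemma Map : D2 n (fun j k => aa j k * aa j j) = 0.
Proof. apply (M_af (fun j => aa j j)). Qed.
Lemma Maq : D2 n (fun j k => aa j k * aa k k) = 0.
Proof. apply (M_afk (fun j => aa j j)). Qed.
Lemma Mapp : D2 n (fun j k => aa j k * aa j j * aa j j) = 0.
Proof. rewrite (D2_ext n _ (fun j k => aa j k * (fun j => aa j j * aa j j) j)) by (intros; simpl; ring). apply M_af. Qed.
Lemma Maqq : D2 n (fun j k => aa j k * aa k k * aa k k) = 0.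
Proof. rewrite (D2_ext n _ (fun j k => aa j k * (fun j => aa j j * aa j j) k)) by (intros; simpl; ring). apply M_afk. Qed.
Lemma Maa : D2 n (fun j k => aa j k * aa j k) = INR n * (INR n * INR d).
Proof.
  rewrite (D2_ext n _ (fun j k => aa j k * aa j k * (fun _ => 1) j)) by (intros; simpl; ring). rewrite M_aaf.
  rewrite <- F3. f_equal. apply rsum_ext. intros; ring.
Qed.
Lemma Maap : D2 n (fun j k => aa j k * aa j k * aa j j) = INR n * P2.
Proof. apply (M_aaf (fun j => aa j j)). Qed.
Lemma Maaq : D2 n (fun j k => aa j k * aa j k * aa k k) = INR n * P2.
Proof. apply (M_aafk (fun j => aa j j)). Qed.
Lemma Mp : D2 n (fun j k => aa j j) = INR n * (INR n * INR d).
Proof. rewrite (M_f (fun j => aa j j)). rewrite F3. auto. Qed.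
Lemma Mq : D2 n (fun j k => aa k k) = INR n * (INR n * INR d).
Proof. rewrite (M_fk (fun j => aa j j)). rewrite F3. auto. Qed.
Lemma Mpp : D2 n (fun j k => aa j j * aa j j) = INR n * P2.
Proof. apply (M_f (fun j => aa j j * aa j j)). Qed.
Lemma Mqq : D2 n (fun j k => aa k k * aa k k) = INR n * P2.
Proof. apply (M_fk (fun j => aa j j * aa j j)). Qed.
Lemma Mpq : D2 n (fun j k => aa j j * aa k k) = (INR n * INR d) * (INR n * INR d).
Proof. rewrite (M_fg (fun j => aa j j) (fun j => aa j j)). rewrite F3. auto. Qed.
Lemma Mc : D2 n (fun j k => 1) = INR n * INR n.
Proof. rewrite (M_f (fun _ => 1)). rewrite rsum_const. ring. Qed.

Lemma G1 : D2 n aa = 0.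
Proof. apply Ma. Qed.

Lemma G2 : D2 n (fun j k => aa j k * (SS d Y j k / 4) + (INR d / 2 - 2 * (SS d Y j k / 4))) = 0.
Proof.
  rewrite (D2_ext n _ (fun j k => / 4 * (aa j k * aa j j) + / 4 * (aa j k * aa k k) + / 2 * (aa j k * aa j k)
     + INR d / 2 * 1 + (- / 2) * aa j j + (- / 2) * aa k k + (-1) * aa j k)).
  2:{ intros. rewrite SS_eq. field. }
  rewrite !D2_plus, !D2_scal. rewrite Map, Maq, Maa, Mc, Mp, Mq. rewrite ?Ma, ?G1. field.
Qed.

Lemma G3 : (0 < n)%nat ->
  16 / (INR n * INR n) * D2 n (fun j k => c2f (aa j k) (SS d Y j k) (INR d)) = 2 * b1d n d Y + b1d_tilde n d Y.
Proof.
  intros Hn. assert (HnR : INR n <> 0) by (apply not_0_INR; lia).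
  rewrite (D2_ext n _ (fun j k => / 32 * (aa j k * aa j j * aa j j) + / 32 * (aa j k * aa k k * aa k k)
     + / 8 * (aa j k * aa j k * aa j k) + / 16 * (aa j k * aa j j * aa k k)
     + / 8 * (aa j k * aa j k * aa j j) + / 8 * (aa j k * aa j k * aa k k)
     + (- / 8) * (aa j j * aa j j) + (- / 8) * (aa k k * aa k k) + (- / 2) * (aa j k * aa j k)
     + (- / 4) * (aa j j * aa k k) + (- / 2) * (aa j k * aa j j) + (- / 2) * (aa j k * aa k k)
     + ((2 * INR d + 4) / 16) * aa j j + ((2 * INR d + 4) / 16) * aa k k + ((2 * INR d + 4) / 8) * aa j k)).
  2:{ intros. unfold c2f. rewrite SS_eq. field. }
  rewrite !D2_plus, !D2_scal.
  rewrite Mapp, Maqq, Maap, Maaq, Mpp, Mqq, Maa, Mpq, Map, Maq, Mp, Mq. rewrite ?Ma, ?G1.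
  fold A3 Bt.
  assert (Hb : b1d n d Y = / (INR n ^ 2) * A3).
  { unfold b1d, A3, D2. f_equal. apply rsum_ext. intros. apply rsum_ext. intros. unfold dotjk. ring. }
  assert (Hbt : b1d_tilde n d Y = / (INR n ^ 2) * Bt).
  { unfold b1d_tilde, Bt, D2. apply f_equal. apply rsum_ext. intros. apply rsum_ext. intros. unfold dotjk, nrm2. ring. }
  rewrite Hb, Hbt. field. auto.
Qed.

End Alg.

Section LinAlg.
Variable d : nat.

Definition Id (i k : nat) : R := if Nat.eqb i k then 1 else 0.

Lemma mm_id_r P i k : (k < d)%nat -> mat_mul d P Id i k = P i k.
Proof.
  intros Hk. unfold mat_mul, Id.
  rewrite (rsum_ext d _ (fun l => if Nat.eqb k l then P i l else 0)).
  - apply (rsum_pick_f d k (fun l => P i l)); auto.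
  - intros l _. rewrite Nat.eqb_sym. destruct (Nat.eqb k l); ring.
Qed.

Lemma mm_id_l P i k : (i < d)%nat -> mat_mul d Id P i k = P i k.
Proof.
  intros Hi. unfold mat_mul, Id.
  rewrite (rsum_ext d _ (fun l => if Nat.eqb i l then P l k else 0)).
  - apply (rsum_pick_f d i (fun l => P l k)); auto.
  - intros l _. destruct (Nat.eqb i l); ring.
Qed.

Lemma mm_assoc P Q T i k : mat_mul d (mat_mul d P Q) T i k = mat_mul d P (mat_mul d Q T) i k.
Proof.
  unfold mat_mul.
  rewrite (rsum_ext d _ (fun l => rsum d (fun r => P i r * Q r l * T l k))).
  2:{ intros. rewrite Rmult_comm, rsum_scal. apply rsum_ext. intros; ring. }
  rewrite rsum_swap. apply rsum_ext. intros r _. rewrite rsum_scal. apply rsum_ext. intros; ring.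
Qed.

Lemma mm_ext_l P P' Q i k : (i < d)%nat -> (forall a b, (a < d)%nat -> (b < d)%nat -> P a b = P' a b) ->
  mat_mul d P Q i k = mat_mul d P' Q i k.
Proof. intros Hi H. unfold mat_mul. apply rsum_ext. intros. rewrite H; auto. Qed.

Lemma mm_ext_r P Q Q' i k : (k < d)%nat -> (forall a b, (a < d)%nat -> (b < d)%nat -> Q a b = Q' a b) ->
  mat_mul d P Q i k = mat_mul d P Q' i k.
Proof. intros Hk H. unfold mat_mul. apply rsum_ext. intros. rewrite H; auto. Qed.

Lemma ASA_id (A S : nat -> nat -> R) :
  sym_mat d A -> sym_mat d S -> is_inverse d (mat_mul d A A) S ->
  forall i k, (i < d)%nat -> (k < d)%nat -> mat_mul d (mat_mul d A S) A i k = Id i k.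
Proof.
  intros HA HS Hinv.
  assert (HAA : forall a b, (a < d)%nat -> (b < d)%nat -> mat_mul d A A a b = mat_mul d A A b a).
  { intros a b Ha Hb. unfold mat_mul. apply rsum_ext. intros r Hr. rewrite (HA a r), (HA r b) by auto. ring. }
  assert (SA2 : forall a b, (a < d)%nat -> (b < d)%nat -> mat_mul d S (mat_mul d A A) a b = Id a b).
  { intros a b Ha Hb.
    transitivity (mat_mul d (mat_mul d A A) S b a).
    - change (rsum d (fun l => S a l * mat_mul d A A l b) = rsum d (fun l => mat_mul d A A b l * S l a)). apply rsum_ext. intros l Hl. rewrite (HS a l), (HAA l b) by auto. ring.
    - rewrite Hinv by auto. unfold Id. rewrite Nat.eqb_sym. auto. }
  set (Mx := mat_mul d (mat_mul d A S) A).
  assert (MA : forall a b, (a < d)%nat -> (b < d)%nat -> mat_mul d Mx A a b = A a b).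
  { intros a b Ha Hb. unfold Mx. rewrite mm_assoc, mm_assoc.
    rewrite (mm_ext_r A _ Id) by auto. apply mm_id_r; auto. }
  intros i k Hi Hk.
  rewrite <- (mm_id_r Mx i k Hk).
  rewrite (mm_ext_r Mx Id (mat_mul d (mat_mul d A A) S)) by (auto; intros; rewrite Hinv by auto; reflexivity).
  rewrite <- mm_assoc.
  rewrite (mm_ext_l (mat_mul d Mx (mat_mul d A A)) (mat_mul d A A)).
  - rewrite Hinv by auto. reflexivity.
  - auto.
  - intros a b Ha Hb. rewrite <- mm_assoc. rewrite (mm_ext_l (mat_mul d Mx A) A); auto.
Qed.

End LinAlg.

Lemma sum_centered n X l : (0 < n)%nat -> rsum n (fun j => X j l - sample_mean n X l) = 0.
Proof.
  intros Hn. rewrite rsum_minus, rsum_const. unfold sample_mean. field. apply not_0_INR. lia.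
Qed.

Lemma cov_sum n X l r : (0 < n)%nat ->
  rsum n (fun j => (X j l - sample_mean n X l) * (X j r - sample_mean n X r)) = INR n * sample_cov n X l r.
Proof. intros Hn. unfold sample_cov. field. apply not_0_INR. lia. Qed.

Lemma sym_cov n d X : sym_mat d (sample_cov n X).
Proof. intros i k _ _. unfold sample_cov. f_equal. apply rsum_ext. intros; ring. Qed.

Lemma Yres_H0 n d A X : (0 < n)%nat -> forall i, (i < d)%nat -> rsum n (fun j => Yres n d A X j i) = 0.
Proof.
  intros Hn i Hi. unfold Yres. rewrite rsum_swap.
  rewrite (rsum_ext d _ (fun _ => 0)). rewrite rsum_const. ring.
  intros l _. rewrite <- rsum_scal. rewrite sum_centered by auto. ring.
Qed.

Lemma Yres_H1 n d A X : (0 < n)%nat -> sym_mat d A -> is_inverse d (mat_mul d A A) (sample_cov n X) ->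
  forall i m, (i < d)%nat -> (m < d)%nat ->
  rsum n (fun j => Yres n d A X j i * Yres n d A X j m) = if Nat.eqb i m then INR n else 0.
Proof.
  intros Hn HA Hinv i m Hi Hm.
  assert (HM := ASA_id d A (sample_cov n X) HA (sym_cov n d X) Hinv i m Hi Hm).
  unfold Id in HM. replace (if Nat.eqb i m then INR n else 0) with (INR n * (if Nat.eqb i m then 1 else 0))
    by (destruct (Nat.eqb i m); ring).
  rewrite <- HM. unfold Yres, mat_mul.
  set (Z := fun j l => X j l - sample_mean n X l).
  transitivity (rsum n (fun j => rsum d (fun l => rsum d (fun r => A i l * A m r * (Z j l * Z j r))))).
  { apply rsum_ext. intros j _. rewrite rsum_mult. apply rsum_ext. intros l _. apply rsum_ext. intros r _. unfold Z. ring. }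
  rewrite rsum_swap. rewrite rsum_scal.
  transitivity (rsum d (fun l => rsum d (fun r => INR n * (A i l * sample_cov n X l r * A r m)))).
  2:{ rewrite rsum_swap. apply rsum_ext. intros r _.
      transitivity (INR n * (A r m * rsum d (fun l => A i l * sample_cov n X l r))).
      - rewrite !rsum_scal. apply rsum_ext; intros; ring.
      - ring. }
  apply rsum_ext. intros l Hl. rewrite rsum_swap. apply rsum_ext. intros r Hr.
  rewrite <- rsum_scal. unfold Z. rewrite cov_sum by auto. rewrite (HA r m) by auto. ring.
Qed.

Theorem mainTheorem8 (n d : nat) (X : nat -> nat -> R) (A : nat -> nat -> R) :
  (1 <= d)%nat ->
  (d + 1 <= n)%nat ->
  pos_def d (sample_cov n X) ->
  is_sym_sqrt_inv d A (sample_cov n X) ->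
  (exists T : R -> R, forall gamma, 0 < gamma -> is_T n d (Yres n d A X) gamma (T gamma)) /\
  (forall T : R -> R,
     (forall gamma, 0 < gamma -> is_T n d (Yres n d A X) gamma (T gamma)) ->
     lim_infty
       (fun gamma => Rpower gamma (2 + INR d / 2) * (16 * T gamma)
                     / (INR n * Rpower PI (INR d / 2)))
       (2 * b1d n d (Yres n d A X) + b1d_tilde n d (Yres n d A X))).
Proof.
  intros Hd Hn Hpd [HAs [_ Hinv]].
  assert (Hn0 : (0 < n)%nat) by lia.
  set (Y := Yres n d A X).
  assert (H0 : forall i, (i < d)%nat -> rsum n (fun j => Y j i) = 0) by (apply Yres_H0; auto).
  assert (H1 : forall i m, (i < d)%nat -> (m < d)%nat ->
            rsum n (fun j => Y j i * Y j m) = if Nat.eqb i m then INR n else 0) by (apply Yres_H1; auto).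
  split.
  - exists (fun g => INR n * Ival n d Y g). intros g Hg. exists (Ival n d Y g). split.
    + apply IntRd_integrand; auto.
    + reflexivity.
  - intros T HT eps Heps.
    assert (HS : forall j k, 0 <= SS d Y j k).
    { intros j k. unfold SS. apply rsum_nonneg. intros. nra. }
    destruct (limit_core n (dotjk d Y) (SS d Y) (INR d) (2 * b1d n d Y + b1d_tilde n d Y) Hn0 HS
               (G1 n d Y H0) (G2 n d Y H0 H1) (G3 n d Y H0 H1 Hn0) eps Heps) as [M HM].
    exists (Rmax M 0). intros g Hg.
    assert (Hg0 : 0 < g) by (pose proof (Rmax_r M 0); lra).
    assert (HgM : M < g) by (pose proof (Rmax_l M 0); lra).
    destruct (HT g Hg0) as [I [HI HTg]].
    assert (HIe : I = Ival n d Y g) by (eapply IntRd_unique; [exact HI | apply IntRd_integrand; auto]).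
    rewrite HTg, HIe. rewrite fexpr_eq by auto. apply HM. auto.
Qed.
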